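(* Let $\mathcal{X}\subseteq\mathbb{R}^n$ be a compact set, $\mathcal{X}_0\subseteq\mathcal{X}$, and $f:\mathcal{X}\to\mathcal{X}$. Let $\mathcal{X}_{VF}\subseteq\mathcal{X}$ be partitioned as $\mathcal{X}_{VF}=\bigcup_{i=1}^{p}\mathcal{X}_{VF_i}$ for some $p\in\mathbb{N}$. Suppose there exist a function $\mathcal{T}:\mathcal{X}\times\mathcal{X}\to\mathbb{R}$ and functions $\mathcal{V}_i:\mathcal{X}\times\mathcal{X}\to\mathbb{R}_{\geq 0}$ (bounded from below), $1\le i\le p$, such that: (i) for all $x\in\mathcal{X}$: $\mathcal{T}(x,f(x))\geq 0$; (ii) for all $x,y\in\mathcal{X}$: if $\mathcal{T}(f(x),y)\geq 0$ then $\mathcal{T}(x,y)\geq 0$; (iii) for every $x_0\in\mathcal{X}_0$ and every $1\le i\le p$ there exists $\xi_i>0$ such that for all $z,z'\in\mathcal{X}_{VF_i}$: if $\mathcal{T}(x_0,z)\geq 0$ and $\mathcal{T}(z,z')\geq 0$, then $\mathcal{V}_i(x_0,z')\leq \mathcal{V}_i(x_0,z)-\xi_i$. Then for every $x_0\in\mathcal{X}_0$, the state sequence $\langle x_0,x_1,\ldots\rangle$ defined by $x_{k+1}=f(x_k)$ satisfies $x_k\in\mathcal{X}_{VF}$ for only finitely many $k\in\mathbb{N}$.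
   Context: This concerns a discrete-time dynamical system $(\mathcal{X},\mathcal{X}_0,f)$ with state set $\mathcal{X}$, initial set $\mathcal{X}_0$ and transition map $f$; its state sequences are $\langle x_0,x_1,\ldots\rangle$ with $x_0\in\mathcal{X}_0$ and $x_{k+1}=f(x_k)$. ''Visited only finitely often'' means only finitely many elements of the state sequence lie in the set. *)

(* Defs.v *)
From HB Require Import structures.
From mathcomp Require Import all_boot all_order all_algebra.
From mathcomp Require Import all_classical all_reals topology normedtype.
Set Implicit Arguments. Unset Strict Implicit. Unset Printing Implicit Defensive.
Import Order.TTheory GRing.Theory Num.Theory.
Import numFieldNormedType.Exports.
Local Open Scope classical_set_scope.
Local Open Scope ring_scope.

Definition state_seq (T : Type) (f : T -> T) (x0 : T) (k : nat) : T := iter k f x0.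

(* Main.v *)
Require Import Defs.
From HB Require Import structures.
From mathcomp Require Import all_boot all_order all_algebra.
From mathcomp Require Import all_classical all_reals topology normedtype.
From mathcomp Require Import lra.
Import Order.TTheory GRing.Theory Num.Theory.
Import numFieldNormedType.Exports.
Local Open Scope classical_set_scope.
Local Open Scope ring_scope.

Theorem lemma1 (R : realType) (n p : nat)
  (X X0 : set 'rV[R]_n) (f : 'rV[R]_n -> 'rV[R]_n)
  (XVFi : 'I_p -> set 'rV[R]_n) (XVF : set 'rV[R]_n)
  (T : 'rV[R]_n -> 'rV[R]_n -> R) (V : 'I_p -> 'rV[R]_n -> 'rV[R]_n -> R) :
  compact X ->
  X0 `<=` X ->
  (forall x, X x -> X (f x)) ->
  XVF `<=` X ->
  XVF = \bigcup_(i in [set: 'I_p]) XVFi i ->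
  (forall i j, i != j -> XVFi i `&` XVFi j = set0) ->
  (forall i x y, X x -> X y -> 0 <= V i x y) ->
  (forall x, X x -> 0 <= T x (f x)) ->
  (forall x y, X x -> X y -> 0 <= T (f x) y -> 0 <= T x y) ->
  (forall x0, X0 x0 -> forall i : 'I_p, exists2 xi : R, 0 < xi &
     forall z z', XVFi i z -> XVFi i z' ->
       0 <= T x0 z -> 0 <= T z z' -> V i x0 z' <= V i x0 z - xi) ->
  forall x0, X0 x0 ->
    finite_set [set k : nat | XVF (state_seq f x0 k)].
Proof.
move=> _ X0X fX _ XVFE _ V0 Ti Tii Hiii x0 Hx0.
set x := state_seq f x0.
have xS k : x k.+1 = f (x k) by rewrite /x /state_seq iterS.
have Xx k : X (x k).
  elim: k => [|k IH]; first exact: X0X.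
  by rewrite xS; apply: fX.
have Tch d k : 0 <= T (x k) (x (k + d).+1).
  elim: d k => [|d IH] k; first by rewrite addn0 xS; apply: Ti.
  apply: Tii => //; rewrite -xS -addSnnS; exact: IH.
have Tlt k m : (k < m)%N -> 0 <= T (x k) (x m).
  move=> km; have -> : m = (k + (m - k.+1)).+1 by rewrite -addSn subnKC.
  exact: Tch.
have Hi (i : 'I_p) : exists N, forall k, (0 < k)%N -> XVFi i (x k) -> (k < N)%N.
  have [xi xi0 H] := Hiii x0 Hx0 i.
  apply/not_existsP => Hc.
  have Hc' N : exists k, [/\ (0 < k)%N, XVFi i (x k) & (N <= k)%N].
    have := Hc N; apply: contra_notP => Hn.
    move=> k k0 Xk; rewrite ltnNge; apply/negP => Nk; apply: Hn; by exists k.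
  have [k1 [k10 Xk1 _]] := Hc' 0%N.
  set v := V i x0 (x k1).
  have Hj j : exists k, [/\ (0 < k)%N, XVFi i (x k) & V i x0 (x k) <= v - j%:R * xi].
    elim: j => [|j [k [k0 Xk Vk]]]; first by exists k1; rewrite mul0r subr0.
    have [m [m0 Xm km]] := Hc' k.+1.
    exists m; split => //.
    have := H _ _ Xk Xm (Tlt _ _ k0) (Tlt _ _ km).
    move=> Hm; apply: (le_trans Hm).
    rewrite -nat1r mulrDl mul1r; move: Vk; set a := V i x0 (x k); set b := (j%:R * xi); move=> Vk; by rewrite opprD addrCA (addrC a) lerD2l.
  have v0 : 0 <= v by rewrite /v; apply: V0; [apply: X0X | apply: Xx].
  have vxi0 : 0 <= v / xi by apply: divr_ge0 => //; apply: ltW.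
  have := archi_boundP vxi0; rewrite ltr_pdivrMr // => vlt.
  have [k [_ _ Vk]] := Hj (Num.Def.archi_bound (v / xi)).
  have := le_trans (V0 i _ _ (Xx 0%N) (Xx k)) Vk.
  by rewrite subr_ge0 leNgt vlt.
have Hall (s : seq 'I_p) : exists N, forall i, i \in s -> forall k, (0 < k)%N -> XVFi i (x k) -> (k < N)%N.
  elim: s => [|i s [N HN]]; first by exists 0%N.
  have [M HM] := Hi i.
  exists (maxn N M) => j; rewrite inE => /orP [/eqP -> | js] k k0 Xk.
    by rewrite leq_max (HM k k0 Xk) orbT.
  by rewrite leq_max (HN j js k k0 Xk).
have [N HN] := Hall (enum 'I_p).
apply: (@sub_finite_set _ _ `I_(N.+1)); last exact: finite_II.
move=> k /=; rewrite XVFE => -[i _ Xk].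
case: k Xk => [|k] Xk; first by [].
rewrite /= ltnS; apply: ltnW; apply: (HN i) => //; by rewrite mem_enum.
Qed.
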